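(* Assume the AGD setting below with controlled step-size parameters (conditions (A1)–(A4) with constants $\alpha,\epsilon_F,\epsilon_B$), and let $c_1,c_2>0$. Suppose there is an update to $p_j$ at time $t$, and let $\Phi^-$ and $\Phi^+$ be the values of the potential $\Phi$ just before and just after this update. Let the updates in $(\tau_j,t)$ be to coordinates $k_1,\dots,k_m$ at times $\beta_1<\dots<\beta_m$. Then $$\Phi^--\Phi^+\ge\Big(1-\frac1\alpha-2\epsilon_B-c_1(1+4\epsilon_B)-2\epsilon_F\Big)\frac{\gamma_j^t(\Delta p_j)^2}{\Delta t_j}+\big(1-c_2-c_1(2+8\epsilon_B)\big)\sum_{i=1}^m\xi_j^{\beta_i}H_{k_ij}^{[\beta_i,t]}(p_j^t)\frac{(\Delta p_{k_i})^2}{\Delta t_{k_i}}.$$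
   Context: Let $\phi:\mathbb{R}^n\to\mathbb{R}$ be a twice continuously differentiable convex function whose minimum value is $0$. Asynchronous gradient descent (AGD) runs in continuous time $t\ge0$ from $p^0$; each coordinate $p_j$ is changed only at discrete update times, no two updates occur simultaneously. For a quantity changed at time $t$, superscript $t$ or $t-$ denotes its value just before and $t+$ just after; $p^t$ is the current point just before any update at time $t$. For an update to $p_j$ at time $t$, $\tau_j$ is the time of the previous update to $p_j$ ($0$ if none), $\Delta t_j=t-\tau_j\le1$ always. $P_j^{[t_1,t_2]}(s)$ is the box of points $p'$ with $p'_j=s$ and, for $k\ne j$, $p'_k$ ranging over the closed interval spanned by $\{p_k^{t'}:t'\in[t_1,t_2]\}$. Update rule: $p_j^{t+}=p_j^t-\frac{\tilde g_j(t)}{\gamma_j^t}\Delta t_j$, $\tilde g_j(t)=\nabla_j\phi(\tilde p^{j,t})$ for some $\tilde p^{j,t}\in P_j^{[\tau_j,t]}(p_j^t)$, $\gamma_j^t>0$; $\Delta p_j=p_j^{t+}-p_j^t$; $g_j(t)=\nabla_j\phi(p^t)$. $H_{k\ell}(S)=\sup_{p'\in S}|\partial^2\phi/\partial p_k\partial p_\ell(p')|$, $H_{k\ell}^{[t_1,t_2]}(s)=H_{k\ell}(P_\ell^{[t_1,t_2]}(s))$. Controlled: constants $\alpha\ge2$, $\epsilon_F,\epsilon_B>0$, $\frac1\alpha+2\epsilon_B+2\epsilon_F<1$, and for each update of $p_j$ at time $t$ positive numbers $\{\xi_k^t\}_{k\ne j}$, with: (A1) for every $p'$ with $p'_k=p_k^t$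 ($k\ne j$) and $p'_j$ between $p_j^t$ and $p_j^{t+}$, $\phi(p')-\phi(p^t)-\nabla_j\phi(p^t)(p'_j-p_j^t)\le\frac{\gamma_j^t}{\alpha}(p'_j-p_j^t)^2$; (A2) $\gamma_j^t\le\bar\gamma_j<\infty$ for all update times of $p_j$; (A3) $\sum_{k\ne j}\xi_k^tH_{jk}^{[t,\sigma_k]}(p_k^t)\le\epsilon_F\gamma_j^t$, $\sigma_k>t$ the next update time of $p_k$; (A4) if the updates in $(\tau_j,t)$ are to $k_1,\dots,k_m$ at times $\beta_1<\dots<\beta_m$ and $\xi_j^{\beta_i}$ is the number assigned to coordinate $j$ at the update at time $\beta_i$, then $\sum_{k\ne j}(\max_{i:k_i=k}1/\xi_j^{\beta_i})H_{kj}^{[\tau_j,t]}(p_j^t)\le\epsilon_B\gamma_j^t$ (empty max read as $0$). Potential: at any time $t$ (with, for each $j$, $\tau_j$ the time of the most recent update to $p_j$ so far and $\sigma_j$ the time of the next update to $p_j$ after $\tau_j$), $$\Phi=\phi(p^t)-c_1\sum_j\int_{\tau_j}^t\frac{(g_j(t'))^2}{\bar\gamma_j}dt'+\sum_j\sum_i\xi_j^{\beta_i}H_{k_ij}^{[\beta_i,\sigma_j]}(p_j^{\tau_j+})\frac{(\Delta p_{k_i})^2}{\Delta t_{k_i}}\big[2-c_2(t-\beta_i)\big],$$ where for each $j$ the index $i$ runs over all updates, at times $\beta_i\in(\tau_j,t]$, to coordinates $k_i\ne j$, and $\Delta p_{k_i},\Delta t_{k_i}$ are the change and elapsed time of that update.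 *)

(* Defs.v *)
From Stdlib Require Import Reals Lra Lia ClassicalEpsilon.
Open Scope R_scope.

(* Points of R^n are represented as functions nat -> R; only the
   coordinates 0..n-1 are meaningful (phi is assumed to depend only on them). *)
Definition point := nat -> R.

Definition upd (x : point) (k : nat) (s : R) : point :=
  fun i => if Nat.eqb i k then s else x i.

Definition between (s a b : R) : Prop := (a <= s <= b) \/ (b <= s <= a).

Definition supR (E : R -> Prop) : R := epsilon (inhabits 0) (fun h => is_lub E h).

Definition Rint (f : R -> R) (a b : R) : R :=
  epsilon (inhabits 0)
    (fun v => exists pr : Riemann_integrable f a b, RiemannInt pr = v).

Fixpoint rsum (f : nat -> R) (m : nat) : R :=
  match m with O => 0 | S m' => rsum f m' + f m' end.

(* ---- the update schedule ----
   Update number i (i = 0,1,2,...) happens at time T i and changes coordinate J i.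
   P i is the point after the first i updates (P 0 = p^0), i.e. the point just
   before update i; P (S i) is the point just after update i. *)

Fixpoint last_idx (J : nat -> nat) (j m : nat) : option nat :=
  match m with
  | O => None
  | S m' => if Nat.eqb (J m') j then Some m' else last_idx J j m'
  end.

(* tau_j when m updates have been performed (0 if none to j) *)
Definition tau (T : nat -> R) (J : nat -> nat) (j m : nat) : R :=
  match last_idx J j m with Some i => T i | None => 0 end.

(* index of the first update after tau_j (0 if no update to j yet) *)
Definition first_after (J : nat -> nat) (j m : nat) : nat :=
  match last_idx J j m with Some i => S i | None => O end.

Definition next_idx (J : nat -> nat) (k i : nat) : option nat :=
  epsilon (inhabits None)
    (fun o => match o with
              | Some i' => (i <= i')%nat /\ J i' = k /\
                           (forall i'', (i <= i'')%nat -> (i'' < i')%nat -> J i'' <> k)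
              | None => forall i', (i <= i')%nat -> J i' <> k
              end).

(* its time; None encodes +infinity (no further update) *)
Definition next_time (T : nat -> R) (J : nat -> nat) (k i : nat) : option R :=
  match next_idx J k i with Some i' => Some (T i') | None => None end.

(* the state index in force at time t: p^t is the value just before any update at t *)
Definition state_idx (T : nat -> R) (t : R) : nat :=
  epsilon (inhabits O)
    (fun s => (s = O /\ t <= T O) \/ ((0 < s)%nat /\ T (pred s) < t /\ t <= T s)).

Definition traj (T : nat -> R) (P : nat -> point) (t : R) : point := P (state_idx T t).

(* the box P_l^{[t1,t2]}(s); t2 = None means t2 = +infinity *)
Definition box (n : nat) (T : nat -> R) (P : nat -> point) (l : nat)
    (t1 : R) (t2 : option R) (s : R) (q : point) : Prop :=
  q l = s /\
  forall k, (k < n)%nat -> k <> l ->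
    exists a b : R,
      t1 <= a /\ t1 <= b /\
      (match t2 with Some u => a <= u /\ b <= u | None => True end) /\
      traj T P a k <= q k <= traj T P b k.

Definition Hsup (hess : nat -> nat -> point -> R) (k l : nat) (S : point -> Prop) : R :=
  supR (fun h => exists q, S q /\ h = Rabs (hess k l q)).

Definition HB (n : nat) (T : nat -> R) (P : nat -> point) (hess : nat -> nat -> point -> R)
    (k l : nat) (t1 : R) (t2 : option R) (s : R) : R :=
  Hsup hess k l (box n T P l t1 t2 s).

Definition dp (P : nat -> point) (J : nat -> nat) (i : nat) : R := P (S i) (J i) - P i (J i).
Definition dt (T : nat -> R) (J : nat -> nat) (i : nat) : R := T i - tau T J (J i) i.

Fixpoint maxinv (J : nat -> nat) (xi : nat -> nat -> R) (j k lo hi : nat) : R :=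
  match hi with
  | O => 0
  | S h => if andb (Nat.leb lo h) (Nat.eqb (J h) k)
           then Rmax (maxinv J xi j k lo h) (/ xi h j)
           else maxinv J xi j k lo h
  end.

Definition Phi (n : nat) (phi : point -> R) (grad : nat -> point -> R)
    (hess : nat -> nat -> point -> R) (T : nat -> R) (J : nat -> nat) (P : nat -> point)
    (gbar : nat -> R) (xi : nat -> nat -> R) (c1 c2 : R) (m : nat) (t : R) : R :=
  phi (P m)
  - c1 * rsum (fun j => Rint (fun t' => (grad j (traj T P t'))^2) (tau T J j m) t / gbar j) n
  + rsum (fun j =>
       rsum (fun i =>
          if Nat.leb (first_after J j m) i then
            xi i j * HB n T P hess (J i) j (T i) (next_time T J j (first_after J j m))
                          (P (first_after J j m) j)
              * (dp P J i)^2 / dt T J i * (2 - c2 * (t - T i))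
          else 0) m) n.

(* Main.v *)
Require Import Defs.
From Stdlib Require Import Reals Lra Lia ClassicalEpsilon FunctionalExtensionality PropExtensionality List.
Open Scope R_scope.


Lemma rsum_ext f g m : (forall i, (i < m)%nat -> f i = g i) -> rsum f m = rsum g m.
Proof. induction m; intros H; simpl; auto. rewrite IHm by (intros; apply H; lia). rewrite (H m) by lia. auto. Qed.

Lemma rsum_le f g m : (forall i, (i < m)%nat -> f i <= g i) -> rsum f m <= rsum g m.
Proof. induction m; intros H; simpl; [lra|]. assert (rsum f m <= rsum g m) by (apply IHm; intros; apply H; lia). specialize (H m ltac:(lia)). lra. Qed.

Lemma rsum_nonneg f m : (forall i, (i < m)%nat -> 0 <= f i) -> 0 <= rsum f m.
Proof. intros H. replace 0 with (rsum (fun _ => 0) m). apply rsum_le; auto. induction m; simpl; auto. rewrite IHm; [lra|]. intros; apply H; lia. Qed.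

Lemma rsum_plus f g m : rsum (fun i => f i + g i) m = rsum f m + rsum g m.
Proof. induction m; simpl; lra. Qed.
Lemma rsum_minus f g m : rsum (fun i => f i - g i) m = rsum f m - rsum g m.
Proof. induction m; simpl; lra. Qed.
Lemma rsum_scal c f m : rsum (fun i => c * f i) m = c * rsum f m.
Proof. induction m; simpl; lra. Qed.
Lemma rsum_zero m : rsum (fun _ => 0) m = 0.
Proof. induction m; simpl; lra. Qed.

Lemma rsum_swap (F : nat -> nat -> R) m n :
  rsum (fun i => rsum (fun k => F i k) n) m = rsum (fun k => rsum (fun i => F i k) m) n.
Proof.
  induction m; simpl. rewrite rsum_zero; auto.
  rewrite IHm. rewrite <- rsum_plus. auto.
Qed.

Lemma rsum_abs f m : Rabs (rsum f m) <= rsum (fun i => Rabs (f i)) m.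
Proof. induction m; simpl. rewrite Rabs_R0; lra. eapply Rle_trans. apply Rabs_triang. lra. Qed.

Lemma rsum_pick (a : nat) (X : R) (Y : nat -> R) n : (a < n)%nat ->
  rsum (fun k => if Nat.eqb k a then X else Y k) n
  = X + rsum (fun k => if Nat.eqb k a then 0 else Y k) n.
Proof.
  induction n; intros Ha; [lia|]. simpl.
  destruct (Nat.eq_dec n a) as [->|Hne].
  - rewrite Nat.eqb_refl.
    assert (E: forall Z, rsum (fun k => if Nat.eqb k a then Z else Y k) a = rsum Y a).
    { intro Z. apply rsum_ext. intros i Hi. destruct (Nat.eqb_spec i a); [lia|auto]. }
    rewrite !E. lra.
  - rewrite IHn by lia. apply Nat.eqb_neq in Hne. rewrite Hne. lra.
Qed.

Lemma sq_le_le u v : 0 <= u -> 0 <= v -> u^2 <= v^2 -> u <= v.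
Proof. intros. destruct (Rle_lt_dec u v); auto. nra. Qed.

Lemma CS_step S X Y e a b : 0 <= S -> 0 <= e -> 0 <= X -> 0 <= Y -> 0 <= a -> 0 <= b ->
  S^2 <= X * Y -> e^2 <= a * b -> (S + e)^2 <= (X + a) * (Y + b).
Proof.
  intros. assert (2*S*e <= X*b + a*Y).
  { apply sq_le_le; try nra.
    assert ((2*S*e)^2 = 4 * (S^2) * (e^2)) by ring. rewrite H7.
    assert (4 * S^2 * e^2 <= 4 * (X*Y) * (a*b)).
    { apply Rmult_le_compat; try nra. }
    pose proof (pow2_ge_0 (X*b - a*Y)). nra. }
  nra.
Qed.

Lemma rsum_CS (e a b : nat -> R) m :
  (forall i, (i < m)%nat -> 0 <= e i /\ 0 <= a i /\ 0 <= b i /\ (e i)^2 <= a i * b i) ->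
  (rsum e m)^2 <= rsum a m * rsum b m.
Proof.
  induction m; intros H; simpl. lra.
  assert (IH := IHm (fun i Hi => H i ltac:(lia))).
  destruct (H m ltac:(lia)) as (?&?&?&?).
  apply CS_step; auto; apply rsum_nonneg; intros; apply H; lia.
Qed.

Lemma Tmono (T : nat -> R) (HTinc : forall i, T i < T (S i)) :
  forall i i', (i < i')%nat -> T i < T i'.
Proof. intros i i' H. induction H. apply HTinc. eapply Rlt_trans; eauto. Qed.

Lemma Tmono_le (T : nat -> R) (HTinc : forall i, T i < T (S i)) :
  forall i i', (i <= i')%nat -> T i <= T i'.
Proof. intros i i' H. destruct (Nat.eq_dec i i'); [subst; lra|]. left; apply Tmono; auto; lia. Qed.

Lemma last_idx_some J k m l : last_idx J k m = Some l ->
  (l < m)%nat /\ J l = k /\ forall i, (l < i < m)%nat -> J i <> k.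
Proof.
  induction m; simpl; intros H; [discriminate|].
  destruct (Nat.eqb_spec (J m) k).
  - inversion H; subst. split; [lia|split; auto]. intros; lia.
  - destruct (IHm H) as (?&?&?). split; [lia|split; auto]. intros i Hi.
    destruct (Nat.eq_dec i m); [subst; auto|]. apply H2; lia.
Qed.

Lemma last_idx_none J k m : last_idx J k m = None -> forall i, (i < m)%nat -> J i <> k.
Proof.
  induction m; simpl; intros H i Hi; [lia|].
  destruct (Nat.eqb_spec (J m) k); [discriminate|].
  destruct (Nat.eq_dec i m); [subst; auto|]. apply IHm; auto; lia.
Qed.

Definition prevT (T : nat -> R) (s : nat) : R := match s with O => 0 | S s' => T s' end.

Lemma tau_prevT T J k m : tau T J k m = prevT T (first_after J k m).
Proof. unfold tau, first_after. destruct (last_idx J k m); auto. Qed.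

Lemma first_after_le J k m : (first_after J k m <= m)%nat.
Proof. unfold first_after. destruct (last_idx J k m) eqn:E; [apply last_idx_some in E; lia|lia]. Qed.

Lemma first_after_noupd J k m : forall i, (first_after J k m <= i < m)%nat -> J i <> k.
Proof.
  unfold first_after. destruct (last_idx J k m) eqn:E.
  - apply last_idx_some in E as (?&?&?). intros; apply H1; lia.
  - intros; eapply last_idx_none; eauto; lia.
Qed.

Lemma first_after_prev J k m : forall l, first_after J k m = S l -> J l = k.
Proof.
  unfold first_after. destruct (last_idx J k m) eqn:E; intros l H; [|discriminate].
  inversion H; subst. apply last_idx_some in E; tauto.
Qed.

Lemma first_after_S_neq J k m : J m <> k -> first_after J k (S m) = first_after J k m.
Proof. intros H. unfold first_after. simpl. apply Nat.eqb_neq in H. rewrite H. auto. Qed.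

Lemma tau_S_neq T J k m : J m <> k -> tau T J k (S m) = tau T J k m.
Proof. intros H. unfold tau. simpl. apply Nat.eqb_neq in H. rewrite H. auto. Qed.

Lemma first_after_S_eq J m : first_after J (J m) (S m) = S m.
Proof. unfold first_after. simpl. rewrite Nat.eqb_refl. auto. Qed.

Lemma tau_S_eq T J m : tau T J (J m) (S m) = T m.
Proof. unfold tau. simpl. rewrite Nat.eqb_refl. auto. Qed.

Lemma P_const (J : nat -> nat) (P : nat -> point)
  (Hupd_other : forall i k, k <> J i -> P (S i) k = P i k) k a b :
  (a <= b)%nat -> (forall i, (a <= i < b)%nat -> J i <> k) -> P b k = P a k.
Proof.
  intros Hab. induction Hab; intros H; auto.
  rewrite Hupd_other. apply IHHab; intros; apply H; lia. intro E; apply (H m); [lia|auto].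
Qed.

Definition sspec (T : nat -> R) (a : R) (s : nat) : Prop :=
  (s = O /\ a <= T O) \/ ((0 < s)%nat /\ T (pred s) < a /\ a <= T s).

Lemma sspec_ex T (HTunb : forall x, exists i, x < T i) a : exists s, sspec T a s.
Proof.
  destruct (HTunb a) as [N HN].
  assert (forall N, a <= T N -> exists s, sspec T a s).
  { induction N0; intros H.
    - exists O; left; auto.
    - destruct (Rle_lt_dec a (T N0)). auto. exists (S N0). right. simpl. split; [lia|lra]. }
  apply (H N); lra.
Qed.

Lemma sspec_uniq T (HTinc : forall i, T i < T (S i)) a s s' : sspec T a s -> sspec T a s' -> s = s'.
Proof.
  assert (forall s s', sspec T a s -> sspec T a s' -> (s < s')%nat -> False).
  { intros x y Hx Hy Hlt. destruct Hy as [[? ?]|(?&?&?)]; [lia|].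
    assert (T x <= T (pred y)) by (apply Tmono_le; auto; lia).
    destruct Hx as [[? ?]|(?&?&?)]; subst; lra. }
  intros. destruct (Nat.lt_trichotomy s s') as [?|[?|?]]; auto; exfalso; eauto.
Qed.

Lemma state_idx_eq T (HTinc : forall i, T i < T (S i)) (HTunb : forall x, exists i, x < T i) a s :
  sspec T a s -> state_idx T a = s.
Proof.
  intros H. unfold state_idx.
  apply (sspec_uniq T HTinc a); auto.
  apply (epsilon_spec (inhabits O) (fun s => sspec T a s)). exists s; auto.
Qed.

Lemma traj_at_T T P (HTinc : forall i, T i < T (S i)) (HTunb : forall x, exists i, x < T i) s :
  traj T P (T s) = P s.
Proof.
  unfold traj. rewrite (state_idx_eq T HTinc HTunb (T s) s); auto.
  destruct s; [left; split; auto; lra|right; simpl; split; [lia|split; [apply HTinc|lra]]].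
Qed.

Lemma traj_range T P (HTinc : forall i, T i < T (S i)) (HTunb : forall x, exists i, x < T i)
  (HT0 : 0 < T O) r m a :
  (r <= m)%nat -> prevT T r < a -> a <= T m -> exists s, (r <= s <= m)%nat /\ traj T P a = P s.
Proof.
  intros Hrm H1 H2. destruct (sspec_ex T HTunb a) as [s Hs].
  exists s. split; [|unfold traj; rewrite (state_idx_eq T HTinc HTunb a s); auto].
  split.
  - destruct (Nat.le_gt_cases r s); auto. exfalso.
    destruct r; [lia|]. simpl in H1. assert (T s <= T r) by (apply Tmono_le; auto; lia).
    destruct Hs as [[? ?]|(?&?&?)]; [subst; lra|]. assert (T s <= T (pred s) \/ True) by auto. assert (T (pred s) < T s) by (apply Tmono; auto; lia). lra.
  - destruct (Nat.le_gt_cases s m); auto. exfalso.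
    destruct Hs as [[? ?]|(?&?&?)]; [lia|].
    assert (T m <= T (pred s)) by (apply Tmono_le; auto; lia). lra.
Qed.

Lemma traj_range' T P (HTinc : forall i, T i < T (S i)) (HTunb : forall x, exists i, x < T i)
  (HT0 : 0 < T O) r m a :
  (r <= m)%nat -> prevT T r <= a -> a <= T m -> exists s, (pred r <= s <= m)%nat /\ traj T P a = P s.
Proof.
  intros Hrm H1 H2. destruct H1 as [H1|H1].
  - destruct (traj_range T P HTinc HTunb HT0 r m a Hrm H1 H2) as (s&?&?). exists s; split; auto; lia.
  - subst a. destruct r; simpl.
    + exists O. split; [lia|]. unfold traj. rewrite (state_idx_eq T HTinc HTunb 0 O); auto. left; split; auto; lra.
    + exists r. split; [lia|]. apply traj_at_T; auto.
Qed.

Lemma prevT_lt T (HTinc : forall i, T i < T (S i)) (HT0 : 0 < T O) r : prevT T r < T r.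
Proof. destruct r; simpl; auto. Qed.

Lemma next_idx_some J k i i' : (i <= i')%nat -> J i' = k ->
  (forall i'', (i <= i'')%nat -> (i'' < i')%nat -> J i'' <> k) -> next_idx J k i = Some i'.
Proof.
  intros H1 H2 H3. unfold next_idx.
  match goal with |- epsilon ?inh ?Pr = _ => assert (HP : Pr (epsilon inh Pr)) end.
  { apply epsilon_spec. exists (Some i'). auto. }
  destruct (epsilon _ _) as [x|] eqn:E; simpl in HP.
  - destruct HP as (?&?&?). f_equal.
    destruct (Nat.lt_trichotomy x i') as [?|[?|?]]; auto; exfalso.
    + apply (H3 x); auto.
    + apply (H4 i'); auto.
  - exfalso; apply (HP i'); auto.
Qed.

Lemma next_idx_shift J k a b : (a <= b)%nat -> (forall i, (a <= i < b)%nat -> J i <> k) ->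
  next_idx J k a = next_idx J k b.
Proof.
  intros Hab H. unfold next_idx. f_equal. apply functional_extensionality. intros [x|].
  - apply propositional_extensionality. split.
    + intros (?&?&?). assert (b <= x)%nat.
      { destruct (Nat.le_gt_cases b x); auto. exfalso; apply (H x); auto; lia. }
      split; auto; split; auto. intros; apply H2; lia.
    + intros (?&?&?). split; [lia|split; auto]. intros i'' ? ?.
      destruct (Nat.lt_ge_cases i'' b); [apply H; lia|apply H2; auto].
  - apply propositional_extensionality. split.
    + intros H1 i' ?; apply H1; lia.
    + intros H1 i' ?. destruct (Nat.lt_ge_cases i' b); [apply H; lia|apply H1; auto].
Qed.
Lemma Rint_eq f a b (pr : Riemann_integrable f a b) : Rint f a b = RiemannInt pr.
Proof.
  unfold Rint.
  assert (H : (fun v => exists pr : Riemann_integrable f a b, RiemannInt pr = v)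
     (epsilon (inhabits 0) (fun v => exists pr : Riemann_integrable f a b, RiemannInt pr = v))).
  { apply epsilon_spec. exists (RiemannInt pr). exists pr; auto. }
  destruct H as [pr' H]. rewrite <- H. apply RiemannInt_P5.
Qed.

Lemma Rint_aa f a : Rint f a a = 0.
Proof. rewrite (Rint_eq f a a (RiemannInt_P7 f a)). apply RiemannInt_P9. Qed.

Lemma piece_isstep f a b c : a <= b -> (forall x, a < x < b -> f x = c) -> IsStepFun f a b.
Proof.
  intros Hab H. exists (cons a (cons b nil)). exists (cons c nil).
  unfold adapted_couple. repeat split.
  - intros i Hi. simpl in Hi. destruct i; [simpl; auto|lia].
  - simpl. unfold Rmin. destruct (Rle_dec a b); lra.
  - simpl. unfold Rmax. destruct (Rle_dec a b); lra.
  - intros i Hi. simpl in Hi. destruct i; [|lia]. simpl. intros x Hx. apply H. exact Hx.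
Qed.

Lemma piece_int f a b c : a <= b -> (forall x, a < x < b -> f x = c) -> Riemann_integrable f a b.
Proof.
  intros Hab H eps.
  exists (mkStepFun (piece_isstep f a b c Hab H)).
  exists (mkStepFun (StepFun_P4 a b 0)). split.
  - intros t Ht. simpl. unfold fct_cte. rewrite Rminus_diag, Rabs_R0. lra.
  - rewrite StepFun_P18. rewrite Rmult_0_l, Rabs_R0. apply cond_pos.
Qed.


Lemma step_int (T : nat -> R) (HTinc : forall i, T i < T (S i)) (HT0 : 0 < T O)
  (f : R -> R) (F : nat -> R)
  (Hf : forall s x, prevT T s < x < T s -> f x = F s) r :
  forall d, Riemann_integrable f (prevT T r) (T (r + d)%nat).
Proof.
  assert (Hp : forall s, prevT T s < T s) by (intros [|s]; simpl; auto).
  induction d.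
  - rewrite Nat.add_0_r. apply (piece_int f _ _ (F r)); [left; apply Hp|]. intros; apply Hf; auto.
  - apply RiemannInt_P24 with (T (r + d)%nat); auto.
    replace (r + S d)%nat with (S (r + d)) by lia.
    apply (piece_int f _ _ (F (S (r+d)))); [left; apply HTinc|].
    intros x Hx; apply Hf. simpl. auto.
Qed.

Lemma Rint_bound f a b M (pr : Riemann_integrable f a b) : a <= b ->
  (forall x, a < x < b -> 0 <= f x <= M) -> Rint f a b <= M * (b - a).
Proof.
  intros Hab H. rewrite (Rint_eq f a b pr).
  pose proof (@RiemannInt_const_bound f a b 0 M pr Hab H). lra.
Qed.
Definition sbound (n : nat) (f : point -> R) (lo hi : nat -> R) (d : nat) (x : point) (dl M : R) : Prop :=
  0 < dl /\ forall y, (forall i, (i < d)%nat -> lo i <= y i <= hi i) ->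
     (forall i, (d <= i < n)%nat -> Rabs (y i - x i) < dl) -> Rabs (f y) <= M.

Lemma fold_min_pos (g : R -> R) l : (forall s, In s l -> 0 < g s) ->
  0 < fold_right (fun s acc => Rmin (g s) acc) 1 l.
Proof. induction l; simpl; intros H; [lra|]. apply Rmin_pos; auto. Qed.

Lemma fold_min_le (g : R -> R) l s : In s l -> fold_right (fun s acc => Rmin (g s) acc) 1 l <= g s.
Proof. induction l; simpl; intros H; [contradiction|]. destruct H as [->|H]. apply Rmin_l.
  eapply Rle_trans; [apply Rmin_r|auto]. Qed.

Lemma fold_max_ge (g : R -> R) l s : In s l -> g s <= fold_right (fun s acc => Rmax (g s) acc) 0 l.
Proof. induction l; simpl; intros H; [contradiction|]. destruct H as [->|H]. apply Rmax_l.
  eapply Rle_trans; [apply IHl; auto|apply Rmax_r]. Qed.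

Lemma cont_bounded_aux (n : nat) (f : point -> R)
  (Hc : forall x eps, 0 < eps -> exists d, 0 < d /\ forall y,
      (forall i, (i < n)%nat -> Rabs (y i - x i) < d) -> Rabs (f y - f x) < eps)
  (lo hi : nat -> R) : forall d, (d <= n)%nat -> forall x, exists dl M, sbound n f lo hi d x dl M.
Proof.
  induction d; intros Hd x.
  - destruct (Hc x 1 ltac:(lra)) as (dl&Hdl&H). exists dl, (Rabs (f x) + 1). split; auto.
    intros y _ Hy. assert (Rabs (f y - f x) < 1) by (apply H; intros; apply Hy; lia).
    pose proof (Rabs_triang_inv (f y) (f x)). lra.
  - destruct (Rlt_le_dec (hi d) (lo d)) as [Hlh|Hlh].
    { exists 1, 0. split; [lra|]. intros y Hy _. specialize (Hy d ltac:(lia)). lra. }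
    set (spec := fun s (p : R * R) => sbound n f lo hi d (upd x d s) (fst p) (snd p)).
    set (ch := fun s => epsilon (inhabits (1, 0)) (spec s)).
    assert (Hch : forall s, spec s (ch s)).
    { intros s. apply epsilon_spec. destruct (IHd ltac:(lia) (upd x d s)) as (a&b&H). exists (a, b). exact H. }
    set (Dl := fun s => fst (ch s)). set (Mf := fun s => snd (ch s)).
    assert (HD : forall s, 0 < Dl s) by (intros s; destruct (Hch s); auto).
    assert (Hcond : forall s, (exists z, (lo d <= s <= hi d /\ Rabs (z - s) < Dl s)) -> lo d <= s <= hi d).
    { intros s (z&?&?); auto. }
    set (fam := mkfamily (fun s => lo d <= s <= hi d) (fun s z => lo d <= s <= hi d /\ Rabs (z - s) < Dl s) Hcond).
    assert (Hcov : covering_open_set (fun c => lo d <= c <= hi d) fam).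
    { split.
      - intros z Hz. exists z. simpl. split; auto. rewrite Rminus_diag, Rabs_R0. apply HD.
      - intros s z Hz. simpl in Hz. destruct Hz as [Hs Hz].
        assert (Hp : 0 < Dl s - Rabs (z - s)) by lra.
        exists (mkposreal _ Hp). intros w Hw. unfold disc in Hw. simpl in Hw. simpl. split; auto.
        pose proof (Rabs_triang (w - z) (z - s)). replace (w - z + (z - s)) with (w - s) in H by ring. lra. }
    destruct (compact_P3 (lo d) (hi d) fam Hcov) as (D'&Hcv&Hfin).
    destruct Hfin as (l&Hl).
    exists (fold_right (fun s acc => Rmin (Dl s) acc) 1 l), (fold_right (fun s acc => Rmax (Mf s) acc) 0 l).
    split. { apply fold_min_pos. intros; apply HD. }
    intros y Hy Hy2.
    destruct (Hcv (y d) (Hy d ltac:(lia))) as (s&Hs). simpl in Hs. destruct Hs as ((Hs1&Hs2)&HsD).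
    assert (Hin : In s l). { apply Hl. simpl. split; auto. }
    eapply Rle_trans; [|apply (fold_max_ge Mf l s Hin)].
    destruct (Hch s) as [_ Hb]. apply Hb.
    + intros i Hi; apply Hy; lia.
    + intros i Hi. unfold upd. destruct (Nat.eqb_spec i d).
      * subst. auto.
      * eapply Rlt_le_trans; [apply Hy2; lia|]. apply (fold_min_le Dl l s Hin).
Qed.

Lemma cont_bounded (n : nat) (f : point -> R)
  (Hc : forall x eps, 0 < eps -> exists d, 0 < d /\ forall y,
      (forall i, (i < n)%nat -> Rabs (y i - x i) < d) -> Rabs (f y - f x) < eps)
  (lo hi : nat -> R) : exists M, forall y, (forall i, (i < n)%nat -> lo i <= y i <= hi i) -> Rabs (f y) <= M.
Proof.
  destruct (cont_bounded_aux n f Hc lo hi n (le_n n) (fun _ => 0)) as (dl&M&_&H).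
  exists M. intros y Hy. apply H; auto. intros; lia.
Qed.

Lemma supR_lub E : bound E -> (exists x, E x) -> is_lub E (supR E).
Proof. intros Hb Hn. unfold supR. apply epsilon_spec. destruct (completeness E Hb Hn) as [m Hm]. exists m; auto. Qed.

Lemma Hsup_lub hess k l (S : point -> Prop) :
  (exists M, forall q, S q -> Rabs (hess k l q) <= M) -> (exists q, S q) ->
  is_lub (fun h => exists q, S q /\ h = Rabs (hess k l q)) (Hsup hess k l S).
Proof.
  intros (M&HM) (q&Hq). apply supR_lub.
  - exists M. intros h (q'&?&->). auto.
  - exists (Rabs (hess k l q)). exists q; auto.
Qed.

Lemma Hsup_ge hess k l S q : is_lub (fun h => exists q, S q /\ h = Rabs (hess k l q)) (Hsup hess k l S) ->
  S q -> Rabs (hess k l q) <= Hsup hess k l S.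
Proof. intros [H _] Hq. apply H. exists q; auto. Qed.

Lemma Hsup_nonneg hess k l S q : is_lub (fun h => exists q, S q /\ h = Rabs (hess k l q)) (Hsup hess k l S) ->
  S q -> 0 <= Hsup hess k l S.
Proof. intros H Hq. eapply Rle_trans; [apply Rabs_pos|]. eapply Hsup_ge; eauto. Qed.

Lemma Hsup_mono hess k l (S1 S2 : point -> Prop) :
  is_lub (fun h => exists q, S1 q /\ h = Rabs (hess k l q)) (Hsup hess k l S1) ->
  is_lub (fun h => exists q, S2 q /\ h = Rabs (hess k l q)) (Hsup hess k l S2) ->
  (forall q, S1 q -> S2 q) -> Hsup hess k l S1 <= Hsup hess k l S2.
Proof.
  intros [_ H1] [H2 _] Hs. apply H1. intros h (q&Hq&->). apply H2. exists q; auto.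
Qed.

Lemma upd_upd z k c s : upd (upd z k c) k s = upd z k s.
Proof. apply functional_extensionality. intros i. unfold upd. destruct (Nat.eqb i k); auto. Qed.
Lemma upd_same z k s : upd z k s k = s.
Proof. unfold upd. rewrite Nat.eqb_refl. auto. Qed.
Lemma upd_other z k s i : i <> k -> upd z k s i = z i.
Proof. intros H. unfold upd. apply Nat.eqb_neq in H. rewrite H. auto. Qed.

Lemma grad_ext n (phi : point -> R) (grad : nat -> point -> R)
  (Hphi_n : forall x y : point, (forall i, (i < n)%nat -> x i = y i) -> phi x = phi y)
  (Hgrad : forall k x, (k < n)%nat -> derivable_pt_lim (fun s => phi (upd x k s)) (x k) (grad k x))
  k x y : (k < n)%nat -> (forall i, (i < n)%nat -> x i = y i) -> grad k x = grad k y.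
Proof.
  intros Hk H. pose proof (Hgrad k x Hk) as H1. pose proof (Hgrad k y Hk) as H2.
  rewrite <- (H k Hk) in H2.
  replace (fun s => phi (upd y k s)) with (fun s => phi (upd x k s)) in H2.
  - eapply uniqueness_limite; eauto.
  - apply functional_extensionality. intros s. apply Hphi_n. intros i Hi. unfold upd. destruct (Nat.eqb i k); auto.
Qed.

Lemma seg_bound (grad : nat -> point -> R) (hess : nat -> nat -> point -> R) k j
  (Hh : forall x, derivable_pt_lim (fun s => grad j (upd x k s)) (x k) (hess k j x))
  z u v H : (forall s, Rmin u v <= s <= Rmax u v -> Rabs (hess k j (upd z k s)) <= H) ->
  Rabs (grad j (upd z k v) - grad j (upd z k u)) <= H * Rabs (v - u).
Proof.
  intros Hb.
  assert (Hd : forall c, derivable_pt_lim (fun s => grad j (upd z k s)) c (hess k j (upd z k c))).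
  { intros c. pose proof (Hh (upd z k c)) as X. rewrite upd_same in X.
    replace (fun s => grad j (upd z k s)) with (fun s => grad j (upd (upd z k c) k s)); auto.
    apply functional_extensionality; intros s; rewrite upd_upd; auto. }
  destruct (Rtotal_order u v) as [Huv|[Huv|Huv]].
  - destruct (MVT_cor2 (fun s => grad j (upd z k s)) (fun s => hess k j (upd z k s)) u v Huv (fun c _ => Hd c))
      as (c&Hc&Hc2).
    simpl in Hc. rewrite Hc, Rabs_mult. apply Rmult_le_compat_r; [apply Rabs_pos|]. apply Hb.
    unfold Rmin, Rmax; destruct (Rle_dec u v); lra.
  - subst. rewrite !Rminus_diag, Rabs_R0. assert (0 <= H). { eapply Rle_trans; [apply Rabs_pos|apply (Hb v)].
     unfold Rmin, Rmax; destruct (Rle_dec v v); lra. } lra.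
  - destruct (MVT_cor2 (fun s => grad j (upd z k s)) (fun s => hess k j (upd z k s)) v u Huv (fun c _ => Hd c))
      as (c&Hc&Hc2).
    simpl in Hc. rewrite <- Rabs_Ropp, Ropp_minus_distr, Hc, Rabs_mult, <- (Rabs_Ropp (v - u)), Ropp_minus_distr.
    apply Rmult_le_compat_r; [apply Rabs_pos|]. apply Hb.
    unfold Rmin, Rmax; destruct (Rle_dec u v); lra.
Qed.


Fixpoint minP (P : nat -> point) (k r c : nat) : R :=
  match c with O => P r k | S c' => Rmin (P r k) (minP P k (S r) c') end.
Fixpoint maxP (P : nat -> point) (k r c : nat) : R :=
  match c with O => P r k | S c' => Rmax (P r k) (maxP P k (S r) c') end.

Lemma minP_bounds P k c : forall r s, (r <= s <= r + c)%nat -> minP P k r c <= P s k <= maxP P k r c.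
Proof.
  induction c; intros r s Hs; simpl.
  - replace s with r by lia. lra.
  - destruct (Nat.eq_dec s r) as [->|Hne].
    + split; [apply Rmin_l|apply Rmax_l].
    + destruct (IHc (S r) s ltac:(lia)). split.
      * eapply Rle_trans; [apply Rmin_r|auto].
      * eapply Rle_trans; [eauto|apply Rmax_r].
Qed.

Lemma minP_att P k c : forall r, exists s, (r <= s <= r + c)%nat /\ minP P k r c = P s k.
Proof.
  induction c; intros r; simpl.
  - exists r; split; auto; lia.
  - destruct (IHc (S r)) as (s&?&Hs). rewrite Hs. unfold Rmin. destruct (Rle_dec (P r k) (P s k)).
    + exists r; split; auto; lia.
    + exists s; split; auto; lia.
Qed.

Lemma maxP_att P k c : forall r, exists s, (r <= s <= r + c)%nat /\ maxP P k r c = P s k.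
Proof.
  induction c; intros r; simpl.
  - exists r; split; auto; lia.
  - destruct (IHc (S r)) as (s&?&Hs). rewrite Hs. unfold Rmax. destruct (Rle_dec (P r k) (P s k)).
    + exists s; split; auto; lia.
    + exists r; split; auto; lia.
Qed.

Lemma box_of_I n T P (HTinc : forall i, T i < T (S i)) (HTunb : forall x, exists i, x < T i)
  l r m s q : (r <= m)%nat -> q l = s ->
  (forall k, (k < n)%nat -> k <> l -> minP P k r (m - r) <= q k <= maxP P k r (m - r)) ->
  box n T P l (T r) (Some (T m)) s q.
Proof.
  intros Hrm Hl H. split; auto. intros k Hk Hkl.
  destruct (minP_att P k (m - r) r) as (s1&?&E1). destruct (maxP_att P k (m - r) r) as (s2&?&E2).
  exists (T s1), (T s2). rewrite !traj_at_T by auto. rewrite <- E1, <- E2.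
  repeat split; try (apply Tmono_le; auto; lia); apply H; auto.
Qed.

Lemma I_of_box n T P (HTinc : forall i, T i < T (S i)) (HTunb : forall x, exists i, x < T i)
  (HT0 : 0 < T O) l r m t1 s q : (r <= m)%nat -> prevT T r <= t1 ->
  box n T P l t1 (Some (T m)) s q ->
  forall k, (k < n)%nat -> k <> l -> minP P k (pred r) (m - pred r) <= q k <= maxP P k (pred r) (m - pred r).
Proof.
  intros Hrm Ht1 [Hl Hb] k Hk Hkl. destruct (Hb k Hk Hkl) as (a&b&Ha&Hb'&(Ha2&Hb2)&Hq).
  destruct (traj_range' T P HTinc HTunb HT0 r m a Hrm ltac:(lra) Ha2) as (s1&?&E1).
  destruct (traj_range' T P HTinc HTunb HT0 r m b Hrm ltac:(lra) Hb2) as (s2&?&E2).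
  rewrite E1, E2 in Hq.
  pose proof (minP_bounds P k (m - pred r) (pred r) s1 ltac:(lia)).
  pose proof (minP_bounds P k (m - pred r) (pred r) s2 ltac:(lia)). lra.
Qed.

Lemma box_nonempty n T P (HTinc : forall i, T i < T (S i)) (HTunb : forall x, exists i, x < T i)
  l t1 m s : t1 <= T m -> box n T P l t1 (Some (T m)) s (upd (P m) l s).
Proof.
  intros H. split; [apply upd_same|]. intros k Hk Hkl. exists (T m), (T m).
  rewrite traj_at_T by auto. rewrite upd_other by auto. repeat split; lra.
Qed.

Lemma HB_lub n T P (hess : nat -> nat -> point -> R)
  (HTinc : forall i, T i < T (S i)) (HTunb : forall x, exists i, x < T i) (HT0 : 0 < T O)
  (Hcont : forall k l x, (k < n)%nat -> (l < n)%nat ->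
     forall eps, 0 < eps -> exists d, 0 < d /\
       forall y : point, (forall i, (i < n)%nat -> Rabs (y i - x i) < d) ->
         Rabs (hess k l y - hess k l x) < eps)
  k l r m t1 s : (k < n)%nat -> (l < n)%nat -> (r <= m)%nat -> prevT T r <= t1 -> t1 <= T m ->
  is_lub (fun h => exists q, box n T P l t1 (Some (T m)) s q /\ h = Rabs (hess k l q))
         (HB n T P hess k l t1 (Some (T m)) s).
Proof.
  intros Hk Hl Hrm H1 H2. unfold HB. apply Hsup_lub.
  - destruct (cont_bounded n (hess k l) (fun x eps He => Hcont k l x Hk Hl eps He)
       (fun i => if Nat.eqb i l then s else minP P i (pred r) (m - pred r))
       (fun i => if Nat.eqb i l then s else maxP P i (pred r) (m - pred r))) as (M&HM).
    exists M. intros q Hq. apply HM. intros i Hi. destruct (Nat.eqb_spec i l).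
    + subst. destruct Hq as [-> _]. lra.
    + eapply I_of_box; eauto.
  - eexists. apply box_nonempty; auto.
Qed.


Definition clamp (a b v : R) : R := Rmax a (Rmin b v).

Lemma clamp_in a b v : a <= b -> a <= clamp a b v <= b.
Proof. unfold clamp, Rmax, Rmin. intros. destruct (Rle_dec b v); destruct (Rle_dec a _); lra. Qed.

Lemma clamp_id a b v : a <= v <= b -> clamp a b v = v.
Proof. unfold clamp, Rmax, Rmin. intros. destruct (Rle_dec b v); destruct (Rle_dec a _); lra. Qed.

Lemma clamp_cases a b w : a <= b ->
  (w <= a /\ clamp a b w = a) \/ (a <= w <= b /\ clamp a b w = w) \/ (b <= w /\ clamp a b w = b).
Proof.
  intros H. unfold clamp. destruct (Rle_dec b w).
  - rewrite Rmin_left by lra. rewrite Rmax_right by lra. right; right; auto.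
  - rewrite Rmin_right by lra. destruct (Rle_dec a w).
    + rewrite Rmax_right by lra. right; left; split; auto; lra.
    + rewrite Rmax_left by lra. left; split; auto; lra.
Qed.
Lemma clamp_lip p p' a' b' w : a' <= p' <= b' ->
  Rabs (clamp (Rmin p a') (Rmax p b') w - clamp a' b' w) <= Rabs (p' - p).
Proof.
  intros H.
  assert (Hlo: (Rmin p a' = p /\ p <= a') \/ (Rmin p a' = a' /\ a' < p)).
  { unfold Rmin; destruct (Rle_dec p a'); [left|right]; split; auto; lra. }
  assert (Hhi: (Rmax p b' = b' /\ p <= b') \/ (Rmax p b' = p /\ b' < p)).
  { unfold Rmax; destruct (Rle_dec p b'); [left|right]; split; auto; lra. }
  destruct Hlo as [[-> ?]|[-> ?]]; destruct Hhi as [[-> ?]|[-> ?]];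
  try lra;
  (destruct (clamp_cases a' b' w ltac:(lra)) as [[? Ec]|[[? Ec]|[? Ec]]]; rewrite ?Ec);
  try (match goal with |- context [clamp ?x ?y w] => destruct (clamp_cases x y w ltac:(lra)) as [[? ->]|[[? ->]|[? ->]]] end);
  unfold Rabs; repeat match goal with |- context [Rcase_abs ?x] => destruct (Rcase_abs x) end; lra.
Qed.

Lemma rsum_from_m' (X : nat -> R) m a : (a >= m)%nat -> rsum (fun i => if Nat.leb a i then X i else 0) m = 0.
Proof.
  induction m; intros Ha; cbn [rsum]; auto. rewrite IHm by lia.
  replace (Nat.leb a m) with false by (symmetry; apply Nat.leb_gt; lia). lra.
Qed.

Lemma rsum_shift (X : nat -> R) m r : (r < m)%nat ->
  rsum (fun i => if Nat.leb r i then X i else 0) m = X r + rsum (fun i => if Nat.leb (S r) i then X i else 0) m.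
Proof.
  induction m; intros H; [lia|]. cbn [rsum].
  destruct (Nat.eq_dec r m) as [->|Hne].
  - rewrite Nat.leb_refl. replace (Nat.leb (S m) m) with false by (symmetry; apply Nat.leb_gt; lia).
    rewrite (rsum_from_m' X m m), (rsum_from_m' X m (S m)) by lia. lra.
  - rewrite IHm by lia. replace (Nat.leb r m) with (Nat.leb (S r) m).
    + lra.
    + destruct (Nat.leb_spec r m); destruct (Nat.leb_spec (S r) m); auto; lia.
Qed.

Lemma rsum_from_m (X : nat -> R) m : rsum (fun i => if Nat.leb m i then X i else 0) m = 0.
Proof.
  assert (E: forall a, (a >= m)%nat -> rsum (fun i => if Nat.leb a i then X i else 0) m = 0).
  { intros a Ha. induction m; simpl; auto. rewrite IHm by lia.
    replace (Nat.leb a m) with false by (symmetry; apply Nat.leb_gt; lia). lra. }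
  apply E; lia.
Qed.

Definition Cl (n : nat) (P : nat -> point) (j m r : nat) (y : point) : point :=
  fun k => if Nat.eqb k j then y k else if Nat.ltb k n
           then clamp (minP P k r (m - r)) (maxP P k r (m - r)) (y k) else y k.

Lemma minP_step P k r m : (r < m)%nat ->
  minP P k r (m - r) = Rmin (P r k) (minP P k (S r) (m - S r)) /\
  maxP P k r (m - r) = Rmax (P r k) (maxP P k (S r) (m - S r)).
Proof. intros H. replace (m - r)%nat with (S (m - S r)) by lia. simpl. auto. Qed.

Lemma minmax_le P k r c : minP P k r c <= maxP P k r c.
Proof. pose proof (minP_bounds P k c r r ltac:(lia)). lra. Qed.

Lemma clamp_path n T J P (grad : nat -> point -> R) (hess : nat -> nat -> point -> R)
  (HTinc : forall i, T i < T (S i)) (HTunb : forall x, exists i, x < T i)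
  (HJ : forall i, (J i < n)%nat)
  (Hupd_other : forall i k, k <> J i -> P (S i) k = P i k)
  j m fa (Hj : (j < n)%nat) (Hfa : (fa <= m)%nat) (Hnoj : forall i, (fa <= i < m)%nat -> J i <> j)
  (Hgx : forall x y, (forall i, (i < n)%nat -> x i = y i) -> grad j x = grad j y)
  (Hh : forall k, (k < n)%nat -> forall x, derivable_pt_lim (fun s => grad j (upd x k s)) (x k) (hess k j x))
  (Hlub : forall r, (fa <= r < m)%nat ->
     is_lub (fun h => exists q, box n T P j (T r) (Some (T m)) (P m j) q /\ h = Rabs (hess (J r) j q))
            (HB n T P hess (J r) j (T r) (Some (T m)) (P m j)))
  y : y j = P m j ->
  (forall k, (k < n)%nat -> k <> j -> minP P k fa (m - fa) <= y k <= maxP P k fa (m - fa)) ->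
  Rabs (grad j y - grad j (P m)) <=
  rsum (fun i => if Nat.leb fa i then HB n T P hess (J i) j (T i) (Some (T m)) (P m j) * Rabs (dp P J i) else 0) m.
Proof.
  intros Hyj Hy.
  set (X := fun i => HB n T P hess (J i) j (T i) (Some (T m)) (P m j) * Rabs (dp P J i)).
  change (rsum (fun i => if Nat.leb fa i then X i else 0) m) with (rsum (fun i => if Nat.leb fa i then X i else 0) m).
  assert (Ea : grad j y = grad j (Cl n P j m fa y)).
  { apply Hgx. intros i Hi. unfold Cl. destruct (Nat.eqb_spec i j); auto.
    apply Nat.ltb_lt in Hi as Hi2. rewrite Hi2. rewrite clamp_id; auto. }
  assert (Eb : grad j (Cl n P j m m y) = grad j (P m)).
  { apply Hgx. intros i Hi. unfold Cl. destruct (Nat.eqb_spec i j); [subst; auto|].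
    apply Nat.ltb_lt in Hi. rewrite Hi. rewrite Nat.sub_diag. simpl. unfold clamp, Rmax, Rmin.
    destruct (Rle_dec _ _); destruct (Rle_dec _ _); lra. }
  assert (Ec : forall r, (fa <= r < m)%nat ->
     Rabs (grad j (Cl n P j m r y) - grad j (Cl n P j m (S r) y)) <= X r).
  { intros r Hr. set (kr := J r). assert (Hkr : kr <> j) by (apply Hnoj; auto).
    assert (Hkrn : (kr < n)%nat) by apply HJ.
    set (Z := Cl n P j m (S r) y).
    assert (Heq : forall k, (k < n)%nat -> k <> kr -> k <> j ->
       minP P k r (m - r) = minP P k (S r) (m - S r) /\ maxP P k r (m - r) = maxP P k (S r) (m - S r)).
    { intros k Hk Hk1 Hk2. destruct (minP_step P k r m ltac:(lia)) as [E1 E2]. rewrite E1, E2.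
      rewrite <- (Hupd_other r k Hk1).
      pose proof (minP_bounds P k (m - S r) (S r) (S r) ltac:(lia)).
      split; [unfold Rmin|unfold Rmax]; destruct (Rle_dec _ _); lra. }
    assert (E1 : grad j (Cl n P j m r y) = grad j (upd Z kr (Cl n P j m r y kr))).
    { apply Hgx. intros i Hi. unfold upd. destruct (Nat.eqb_spec i kr); [subst; auto|].
      unfold Z, Cl. destruct (Nat.eqb_spec i j); auto. apply Nat.ltb_lt in Hi as Hi'. rewrite Hi'.
      destruct (Heq i Hi n0 n1) as [-> ->]. auto. }
    assert (E2 : grad j Z = grad j (upd Z kr (Z kr))).
    { f_equal. apply functional_extensionality; intros i. unfold upd. destruct (Nat.eqb_spec i kr); subst; auto. }
    rewrite E1, E2.
    set (u := Cl n P j m r y kr). set (v := Z kr).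
    assert (Hu : u = clamp (minP P kr r (m - r)) (maxP P kr r (m - r)) (y kr)).
    { unfold u, Cl. apply Nat.eqb_neq in Hkr. rewrite Hkr. apply Nat.ltb_lt in Hkrn. rewrite Hkrn. auto. }
    assert (Hv : v = clamp (minP P kr (S r) (m - S r)) (maxP P kr (S r) (m - S r)) (y kr)).
    { unfold v, Z, Cl. apply Nat.eqb_neq in Hkr. rewrite Hkr. apply Nat.ltb_lt in Hkrn. rewrite Hkrn. auto. }
    destruct (minP_step P kr r m ltac:(lia)) as [Em EM].
    pose proof (minP_bounds P kr (m - S r) (S r) (S r) ltac:(lia)) as HbS.
    assert (Huv : Rabs (v - u) <= Rabs (dp P J r)).
    { rewrite Hu, Hv, Em, EM, Rabs_minus_sym. unfold dp. fold kr. apply clamp_lip. lra. }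
    assert (HH : forall s, Rmin u v <= s <= Rmax u v ->
              Rabs (hess kr j (upd Z kr s)) <= HB n T P hess (J r) j (T r) (Some (T m)) (P m j)).
    { intros s Hs. apply Hsup_ge with (q := upd Z kr s). apply Hlub; auto.
      apply box_of_I; auto; [lia| |].
      - rewrite upd_other by auto. unfold Z, Cl. rewrite Nat.eqb_refl. auto.
      - intros k Hk Hkj. destruct (Nat.eq_dec k kr) as [->|Hne].
        + rewrite upd_same.
          assert (minP P kr r (m - r) <= u <= maxP P kr r (m - r)) by (rewrite Hu; apply clamp_in, minmax_le).
          assert (minP P kr (S r) (m - S r) <= v <= maxP P kr (S r) (m - S r)) by (rewrite Hv; apply clamp_in, minmax_le).
          assert (minP P kr r (m - r) <= v <= maxP P kr r (m - r)).
          { rewrite Em, EM. pose proof (Rmin_r (P r kr) (minP P kr (S r) (m - S r))).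
            pose proof (Rmax_r (P r kr) (maxP P kr (S r) (m - S r))). lra. }
          pose proof (Rmin_glb u v (minP P kr r (m - r)) ltac:(lra) ltac:(lra)).
          pose proof (Rmax_lub u v (maxP P kr r (m - r)) ltac:(lra) ltac:(lra)). lra.
        + rewrite upd_other by auto. destruct (Heq k Hk Hne Hkj) as [-> ->].
          unfold Z, Cl. apply Nat.eqb_neq in Hkj. rewrite Hkj. apply Nat.ltb_lt in Hk. rewrite Hk.
          apply clamp_in, minmax_le. }
    pose proof (seg_bound grad hess kr j (Hh kr Hkrn) Z u v _ HH).
    assert (0 <= HB n T P hess (J r) j (T r) (Some (T m)) (P m j)).
    { eapply Hsup_nonneg. apply Hlub; auto. apply box_nonempty; auto. apply Tmono_le; auto; lia. }
    rewrite Rabs_minus_sym. unfold X. eapply Rle_trans; [apply H|]. apply Rmult_le_compat_l; auto. }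
  assert (Ed : forall d, (d <= m - fa)%nat ->
     Rabs (grad j (Cl n P j m (m - d) y) - grad j (Cl n P j m m y)) <=
     rsum (fun i => if Nat.leb (m - d) i then X i else 0) m).
  { induction d; intros Hd.
    - rewrite Nat.sub_0_r, Rminus_diag, Rabs_R0, rsum_from_m. lra.
    - rewrite rsum_shift by lia. replace (S (m - S d)) with (m - d)%nat by lia.
      pose proof (Ec (m - S d)%nat ltac:(lia)). replace (S (m - S d)) with (m - d)%nat in H by lia.
      pose proof (IHd ltac:(lia)).
      pose proof (Rabs_triang (grad j (Cl n P j m (m - S d) y) - grad j (Cl n P j m (m - d) y))
                               (grad j (Cl n P j m (m - d) y) - grad j (Cl n P j m m y))).
      replace (grad j (Cl n P j m (m - S d) y) - grad j (Cl n P j m (m - d) y) +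
                (grad j (Cl n P j m (m - d) y) - grad j (Cl n P j m m y)))
         with (grad j (Cl n P j m (m - S d) y) - grad j (Cl n P j m m y)) in H1 by ring.
      lra. }
  pose proof (Ed (m - fa)%nat (le_n _)). replace (m - (m - fa))%nat with fa in H by lia.
  rewrite Ea, <- Eb. exact H.
Qed.


Lemma rsum_ind0 (a : nat) (X : R) n : (a < n)%nat -> rsum (fun k => if Nat.eqb k a then X else 0) n = X.
Proof. intros H. rewrite rsum_pick by auto.
  rewrite (rsum_ext _ (fun _ => 0)). rewrite rsum_zero; lra. intros; destruct (Nat.eqb i a); auto. Qed.

Lemma next_time_j T J m : next_time T J (J m) (first_after J (J m) m) = Some (T m).
Proof.
  unfold next_time. rewrite (next_idx_some J (J m) _ m); auto.
  apply first_after_le. intros; apply (first_after_noupd J (J m) m); lia.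
Qed.

Lemma next_time_k T J m k : k <> J m -> next_time T J k (first_after J k m) = next_time T J k (S m).
Proof.
  intros H. unfold next_time. rewrite (next_idx_shift J k (first_after J k m) (S m)); auto.
  pose proof (first_after_le J k m); lia.
  intros i Hi. destruct (Nat.eq_dec i m) as [->|]; auto. apply (first_after_noupd J k m); lia.
Qed.

Lemma P_fa (J : nat -> nat) (P : nat -> point)
  (Hupd_other : forall i k, k <> J i -> P (S i) k = P i k) k m :
  P (first_after J k m) k = P m k.
Proof.
  symmetry. apply (P_const J P Hupd_other). apply first_after_le. apply first_after_noupd.
Qed.

Lemma Phi_diff n phi grad hess T J P gbar xi c1 c2 m
  (HJ : (J m < n)%nat) (Hupd_other : forall i k, k <> J i -> P (S i) k = P i k) :
  Phi n phi grad hess T J P gbar xi c1 c2 m (T m) - Phi n phi grad hess T J P gbar xi c1 c2 (S m) (T m) =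
  phi (P m) - phi (P (S m))
  - c1 * (Rint (fun t' => (grad (J m) (traj T P t'))^2) (tau T J (J m) m) (T m) / gbar (J m))
  + rsum (fun i => if Nat.leb (first_after J (J m) m) i then
       xi i (J m) * HB n T P hess (J i) (J m) (T i) (Some (T m)) (P m (J m))
         * (dp P J i)^2 / dt T J i * (2 - c2 * (T m - T i)) else 0) m
  - rsum (fun k => if Nat.eqb k (J m) then 0 else
       xi m k * HB n T P hess (J m) k (T m) (next_time T J k (S m)) (P m k)) n
    * ((dp P J m)^2 / dt T J m * 2).
Proof.
  unfold Phi.
  set (RA := rsum _ n). set (RB := rsum (fun j => Rint _ (tau T J j (S m)) (T m) / gbar j) n).
  assert (ER : RA - RB = Rint (fun t' => (grad (J m) (traj T P t'))^2) (tau T J (J m) m) (T m) / gbar (J m)).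
  { unfold RA, RB. rewrite <- rsum_minus.
    rewrite (rsum_ext _ (fun j => if Nat.eqb j (J m) then
        Rint (fun t' => (grad (J m) (traj T P t'))^2) (tau T J (J m) m) (T m) / gbar (J m) else 0)).
    - apply rsum_ind0; auto.
    - intros j Hj. destruct (Nat.eqb_spec j (J m)).
      + subst. rewrite tau_S_eq, Rint_aa. lra.
      + rewrite tau_S_neq by auto. lra. }
  set (QA := rsum (fun j => rsum _ m) n). set (QB := rsum (fun j => rsum _ (S m)) n).
  set (OLD := rsum (fun i => if Nat.leb (first_after J (J m) m) i then
       xi i (J m) * HB n T P hess (J i) (J m) (T i) (Some (T m)) (P m (J m))
         * (dp P J i)^2 / dt T J i * (2 - c2 * (T m - T i)) else 0) m).
  set (A3s := rsum (fun k => if Nat.eqb k (J m) then 0 else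
       xi m k * HB n T P hess (J m) k (T m) (next_time T J k (S m)) (P m k)) n).
  assert (EQ : QA - QB = OLD - A3s * ((dp P J m)^2 / dt T J m * 2)).
  { unfold QA, QB. rewrite <- rsum_minus.
    rewrite (rsum_ext _ (fun j => if Nat.eqb j (J m) then OLD else
       - (xi m j * HB n T P hess (J m) j (T m) (next_time T J j (S m)) (P m j) * ((dp P J m)^2 / dt T J m * 2)))).
    - rewrite rsum_pick by auto. unfold A3s.
      rewrite (rsum_ext _ (fun k => (- ((dp P J m)^2 / dt T J m * 2)) * (if Nat.eqb k (J m) then 0 else
         xi m k * HB n T P hess (J m) k (T m) (next_time T J k (S m)) (P m k)))).
      + rewrite rsum_scal. ring.
      + intros k Hk. destruct (Nat.eqb k (J m)); ring.
    - intros j Hj. destruct (Nat.eqb_spec j (J m)).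
      + subst j. rewrite first_after_S_eq.
        rewrite (rsum_ext (fun i => if Nat.leb (S m) i then _ else 0) (fun _ => 0)).
        * rewrite rsum_zero, Rminus_0_r. unfold OLD. apply rsum_ext. intros i Hi.
          destruct (Nat.leb _ i); auto. rewrite next_time_j, (P_fa J P Hupd_other). auto.
        * intros i Hi. replace (Nat.leb (S m) i) with false; auto. symmetry; apply Nat.leb_gt; lia.
      + rewrite first_after_S_neq by auto. cbn [rsum].
        replace (Nat.leb (first_after J j m) m) with true by (symmetry; apply Nat.leb_le, first_after_le).
        rewrite next_time_k, (P_fa J P Hupd_other) by auto.
        replace (T m - T m) with 0 by ring. set (ZZ := rsum _ m). unfold Rdiv. ring. }
  transitivity (phi (P m) - phi (P (S m)) - c1 * (RA - RB) + (QA - QB)); [ring|].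
  rewrite ER, EQ. unfold OLD, A3s. ring.
Qed.


Lemma maxinv_nonneg J xi j k lo hi : 0 <= maxinv J xi j k lo hi.
Proof. induction hi; simpl; [lra|]. destruct (andb _ _); auto. eapply Rle_trans; [eauto|apply Rmax_l]. Qed.

Lemma maxinv_ge J xi j k lo hi i : (lo <= i < hi)%nat -> J i = k -> / xi i j <= maxinv J xi j k lo hi.
Proof.
  induction hi; intros Hi Hk; [lia|]. simpl.
  destruct (Nat.eq_dec i hi) as [->|Hne].
  - rewrite (proj2 (Nat.leb_le lo hi)) by lia. rewrite Hk, Nat.eqb_refl. simpl. apply Rmax_r.
  - destruct (andb _ _); [eapply Rle_trans; [apply IHhi; auto; lia|apply Rmax_l]|apply IHhi; auto; lia].
Qed.

Lemma dt_pos T J (HTinc : forall i, T i < T (S i)) (HT0 : 0 < T O) i : 0 < dt T J i.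
Proof.
  unfold dt. rewrite tau_prevT. pose proof (first_after_le J (J i) i).
  pose proof (prevT_lt T HTinc HT0 (first_after J (J i) i)).
  pose proof (Tmono_le T HTinc _ _ H). lra.
Qed.

Lemma Sk_bound T J (HTinc : forall i, T i < T (S i)) (HT0 : 0 < T O) (Hdt : forall i, dt T J i <= 1)
  k fa tau0 (Htau : tau0 <= prevT T fa) :
  forall d, rsum (fun i => if Nat.leb fa i then (if Nat.eqb k (J i) then dt T J i else 0) else 0) (fa + d)%nat
            <= Rmax 0 (1 + tau T J k (fa + d)%nat - tau0).
Proof.
  induction d.
  - rewrite Nat.add_0_r. rewrite (rsum_ext _ (fun _ => 0)). rewrite rsum_zero. apply Rmax_l.
    intros i Hi. replace (Nat.leb fa i) with false; auto. symmetry; apply Nat.leb_gt; lia.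
  - replace (fa + S d)%nat with (S (fa + d)%nat) by lia. cbn [rsum].
    replace (Nat.leb fa (fa + d)%nat) with true by (symmetry; apply Nat.leb_le; lia).
    assert (Hm : prevT T fa <= T (fa + d)%nat).
    { pose proof (prevT_lt T HTinc HT0 fa). pose proof (Tmono_le T HTinc fa (fa + d)%nat ltac:(lia)). lra. }
    destruct (Nat.eqb_spec k (J (fa + d)%nat)).
    + subst k. rewrite tau_S_eq. pose proof (Hdt (fa + d)%nat). unfold dt in *.
      set (tt := tau T J (J (fa + d)%nat) (fa + d)%nat) in *.
      assert (1 + T (fa + d)%nat - tau0 >= 0) by lra.
      rewrite (Rmax_right 0 (1 + T (fa + d)%nat - tau0)) by lra.
      unfold Rmax in IHd. destruct (Rle_dec 0 (1 + tt - tau0)); lra.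
    + rewrite tau_S_neq by auto. lra.
Qed.

Lemma amgm_term H w d x y : 0 <= H -> 0 < w -> 0 < d ->
  H * Rabs x * Rabs y <= w * H * x^2 / d + H * d * y^2 / (4 * w).
Proof.
  intros HH Hw Hd.
  assert (E : w * H * x^2 / d + H * d * y^2 / (4 * w) - H * Rabs x * Rabs y
              = H * ((2 * w * Rabs x - d * Rabs y)^2 / (4 * w * d))).
  { rewrite <- (pow2_abs x), <- (pow2_abs y). field. lra. }
  assert (0 <= H * ((2 * w * Rabs x - d * Rabs y)^2 / (4 * w * d))).
  { apply Rmult_le_pos; auto. unfold Rdiv. apply Rmult_le_pos. apply pow2_ge_0. left; apply Rinv_0_lt_compat; nra. }
  lra.
Qed.

Lemma Rint_bound2 f a b M (pr : Riemann_integrable f a b) : a <= b ->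
  (forall x, a < x < b -> 0 <= f x <= M) -> 0 <= Rint f a b <= M * (b - a).
Proof.
  intros Hab H. rewrite (Rint_eq f a b pr).
  pose proof (@RiemannInt_const_bound f a b 0 M pr Hab H). lra.
Qed.

Lemma sq_split a e lam : 0 < lam -> (a + e)^2 <= (1 + lam) * a^2 + (1 + /lam) * e^2.
Proof.
  intros H. assert (0 <= (lam * a - e)^2 / lam).
  { unfold Rdiv. apply Rmult_le_pos; [apply pow2_ge_0|left; apply Rinv_0_lt_compat; auto]. }
  assert ((1 + lam) * a^2 + (1 + /lam) * e^2 - (a + e)^2 = (lam * a - e)^2 / lam) by (field; lra).
  lra.
Qed.


Lemma final_alg Dphi g gt dp Dt gam gbar E A B Ri OLD A3s alpha eB eF c1 c2 :
  Dphi >= - g*dp - gam/alpha * dp^2 ->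
  dp = - gt/gam * Dt ->
  Rabs (gt - g) <= E ->
  0 <= Ri <= ((1 + 4*eB)*gt^2 + (1 + /(4*eB))*(4*E^2)) * Dt ->
  E^2 <= A*B -> B <= eB*gam*(1+Dt) -> E * Rabs dp <= A + dp^2 * B / 4 ->
  OLD >= (2-c2)*A -> A3s <= eF*gam ->
  0 < Dt -> Dt <= 1 -> 0 < gam -> gam <= gbar -> 2 <= alpha -> 0 < eB -> 0 < eF -> 0 < c1 -> 0 < c2 ->
  0 <= A -> 0 <= B -> 0 <= E ->
  Dphi - c1*(Ri/gbar) + OLD - A3s*(dp^2/Dt*2) >=
  (1 - 1/alpha - 2*eB - c1*(1+4*eB) - 2*eF) * (gam*dp^2/Dt) + (1 - c2 - c1*(2+8*eB))*A.
Proof.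
  intros Hphi Hdp HE HRi HCS HB Hmix HOLD HA3 HDt HDt1 Hgam Hgbar Hal HeB HeF Hc1 Hc2 HA HB0 HE0.
  set (Q := gam*dp^2/Dt).
  assert (HQ : 0 <= Q) by (unfold Q; apply Rmult_le_pos; [apply Rmult_le_pos; [lra|apply pow2_ge_0]|left; apply Rinv_0_lt_compat; lra]).
  assert (d1 : gt * dp = - Q) by (unfold Q; rewrite Hdp; field; lra).
  assert (d2 : - g * dp >= Q - E * Rabs dp).
  { assert (Rabs ((gt - g) * dp) <= E * Rabs dp) by (rewrite Rabs_mult; apply Rmult_le_compat_r; [apply Rabs_pos|auto]).
    pose proof (Rle_abs (-((gt - g) * dp))). rewrite Rabs_Ropp in H0. lra. }
  assert (d3 : gam/alpha * dp^2 <= Q/alpha).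
  { unfold Q. unfold Rdiv. assert (0 < /alpha) by (apply Rinv_0_lt_compat; lra).
    assert (gam * dp^2 <= gam * dp^2 * /Dt).
    { assert (1 <= /Dt) by (rewrite <- Rinv_1; apply Rinv_le_contravar; lra).
      assert (0 <= gam * dp^2) by (apply Rmult_le_pos; [lra|apply pow2_ge_0]). nra. }
    nra. }
  assert (d4 : Ri/gbar <= Ri/gam).
  { unfold Rdiv. apply Rmult_le_compat_l; [lra|]. apply Rinv_le_contravar; lra. }
  assert (d5 : Ri/gam <= (1 + 4*eB) * Q + (1 + /(4*eB)) * 4 * (E^2 * Dt / gam)).
  { assert (gt^2 * Dt / gam = Q). { unfold Q. rewrite Hdp. field. lra. }
    destruct HRi as [_ HRi].
    assert (Ri / gam <= ((1 + 4 * eB) * gt ^ 2 + (1 + / (4 * eB)) * (4 * E ^ 2)) * Dt / gam).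
    { unfold Rdiv. apply Rmult_le_compat_r; auto. left; apply Rinv_0_lt_compat; lra. }
    assert (((1 + 4 * eB) * gt ^ 2 + (1 + / (4 * eB)) * (4 * E ^ 2)) * Dt / gam
            = (1 + 4*eB) * (gt^2 * Dt / gam) + (1 + /(4*eB)) * 4 * (E^2 * Dt / gam)) by (field; lra).
    rewrite H in H1. lra. }
  assert (d6 : E^2 * Dt / gam <= 2 * eB * A).
  { assert (E^2 <= A * (eB*gam*(1+Dt))) by (eapply Rle_trans; [apply HCS|apply Rmult_le_compat_l; auto]).
    assert (E^2 * Dt / gam <= A * eB * (1 + Dt) * Dt).
    { apply (Rmult_le_reg_r gam); auto. unfold Rdiv. rewrite Rmult_assoc, Rinv_l by lra. nra. }
    assert (A * eB * (1 + Dt) * Dt <= 2 * eB * A).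
    { assert (0 <= A * eB) by nra. assert ((1 + Dt) * Dt <= 2) by nra. nra. }
    lra. }
  assert (d7 : E * Rabs dp <= A + 2 * eB * Q).
  { assert (dp^2 * B / 4 <= 2 * eB * Q).
    { unfold Q. assert (dp^2 * B <= dp^2 * (eB*gam*(1+Dt))) by (apply Rmult_le_compat_l; [apply pow2_ge_0|auto]).
      assert (dp^2 * (eB*gam*(1+Dt)) / 4 <= 2 * eB * (gam * dp ^ 2 / Dt)).
      { apply (Rmult_le_reg_r Dt); auto. unfold Rdiv. field_simplify; [|lra].
        assert (0 <= dp^2 * eB * gam) by (pose proof (pow2_ge_0 dp); nra).
        assert ((1 + Dt) * Dt <= 8) by nra. nra. }
      lra. }
    lra. }
  assert (d8 : A3s*(dp^2/Dt*2) <= 2 * eF * Q).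
  { unfold Q. assert (0 <= dp^2/Dt*2).
    { unfold Rdiv. apply Rmult_le_pos; [apply Rmult_le_pos; [apply pow2_ge_0|left; apply Rinv_0_lt_compat; lra]|lra]. }
    assert (A3s*(dp^2/Dt*2) <= eF*gam*(dp^2/Dt*2)) by (apply Rmult_le_compat_r; auto).
    assert (eF*gam*(dp^2/Dt*2) = 2 * eF * (gam * dp^2 / Dt)) by (field; lra). lra. }
  assert (d9 : c1 * (Ri/gbar) <= c1 * (1 + 4*eB) * Q + c1 * (8 * eB + 2) * A).
  { assert (Ri/gbar <= (1 + 4*eB) * Q + (8 * eB + 2) * A).
    { assert ((1 + /(4*eB)) * 4 * (E^2 * Dt / gam) <= (1 + /(4*eB)) * 4 * (2 * eB * A)).
      { apply Rmult_le_compat_l; auto. assert (0 < /(4*eB)) by (apply Rinv_0_lt_compat; lra). lra. }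
      assert ((1 + /(4*eB)) * 4 * (2 * eB * A) = (8 * eB + 2) * A) by (field; lra). lra. }
    replace (c1 * (1 + 4 * eB) * Q + c1 * (8 * eB + 2) * A) with (c1 * ((1 + 4 * eB) * Q + (8 * eB + 2) * A)) by ring.
    apply Rmult_le_compat_l; lra. }
  assert (Q/alpha = 1/alpha * Q) by (unfold Rdiv; ring).
  unfold Q in *. nra.
Qed.


Theorem mainTheorem4
  (n : nat) (phi : point -> R) (grad : nat -> point -> R)
  (hess : nat -> nat -> point -> R)
  (* phi : R^n -> R, depends only on coordinates < n *)
  (Hphi_n : forall x y : point, (forall i, (i < n)%nat -> x i = y i) -> phi x = phi y)
  (* grad k = d phi / d p_k *)
  (Hgrad : forall k x, (k < n)%nat ->
     derivable_pt_lim (fun s => phi (upd x k s)) (x k) (grad k x))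
  (* hess k l = d/dp_k (d phi / d p_l) *)
  (Hhess : forall k l x, (k < n)%nat -> (l < n)%nat ->
     derivable_pt_lim (fun s => grad l (upd x k s)) (x k) (hess k l x))
  (* second partials continuous: phi is C^2 *)
  (Hcont : forall k l x, (k < n)%nat -> (l < n)%nat ->
     forall eps, 0 < eps -> exists d, 0 < d /\
       forall y : point, (forall i, (i < n)%nat -> Rabs (y i - x i) < d) ->
         Rabs (hess k l y - hess k l x) < eps)
  (Hconv : forall (x y : point) (lam : R), 0 <= lam <= 1 ->
     phi (fun i => lam * x i + (1 - lam) * y i) <= lam * phi x + (1 - lam) * phi y)
  (Hmin0 : (forall x, 0 <= phi x) /\ (exists x, phi x = 0))
  (* the asynchronous schedule *)
  (T : nat -> R) (J : nat -> nat) (P : nat -> point)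
  (HT0 : 0 < T O)
  (HTinc : forall i, T i < T (S i))
  (HTunb : forall x, exists i, x < T i)
  (HJ : forall i, (J i < n)%nat)
  (gam : nat -> R) (gbar : nat -> R) (xi : nat -> nat -> R)
  (Hgam : forall i, 0 < gam i)
  (Hxi : forall i k, (k < n)%nat -> k <> J i -> 0 < xi i k)
  (Hdt : forall i, dt T J i <= 1)
  (Hupd_other : forall i k, k <> J i -> P (S i) k = P i k)
  (Hupd : forall i, exists pt : point,
     box n T P (J i) (tau T J (J i) i) (Some (T i)) (P i (J i)) pt /\
     P (S i) (J i) = P i (J i) - grad (J i) pt / gam i * dt T J i)
  (* control constants *)
  (alpha epsF epsB : R)
  (Halpha : 2 <= alpha) (HepsF : 0 < epsF) (HepsB : 0 < epsB)
  (Hconst : 1 / alpha + 2 * epsB + 2 * epsF < 1)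
  (A1 : forall i s, between s (P i (J i)) (P (S i) (J i)) ->
     phi (upd (P i) (J i) s) - phi (P i) - grad (J i) (P i) * (s - P i (J i))
       <= gam i / alpha * (s - P i (J i))^2)
  (A2 : forall i, gam i <= gbar (J i))
  (A3 : forall i,
     rsum (fun k => if Nat.eqb k (J i) then 0 else
             xi i k * HB n T P hess (J i) k (T i) (next_time T J k (S i)) (P i k)) n
       <= epsF * gam i)
  (A4 : forall i,
     rsum (fun k => if Nat.eqb k (J i) then 0 else
             maxinv J xi (J i) k (first_after J (J i) i) i
               * HB n T P hess k (J i) (tau T J (J i) i) (Some (T i)) (P i (J i))) n
       <= epsB * gam i)
  (c1 c2 : R) (Hc1 : 0 < c1) (Hc2 : 0 < c2)
  (* the update under consideration: update number m, to j = J m at time t = T m *)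
  (m : nat) :
  Phi n phi grad hess T J P gbar xi c1 c2 m (T m)
    - Phi n phi grad hess T J P gbar xi c1 c2 (S m) (T m)
  >= (1 - 1 / alpha - 2 * epsB - c1 * (1 + 4 * epsB) - 2 * epsF)
        * (gam m * (dp P J m)^2 / dt T J m)
     + (1 - c2 - c1 * (2 + 8 * epsB))
        * rsum (fun i =>
             if Nat.leb (first_after J (J m) m) i then
               xi i (J m) * HB n T P hess (J i) (J m) (T i) (Some (T m)) (P m (J m))
                 * (dp P J i)^2 / dt T J i
             else 0) m.
Proof.
  assert (HjN : (J m < n)%nat) by apply HJ.
  rewrite (Phi_diff n phi grad hess T J P gbar xi c1 c2 m HjN Hupd_other).
  set (j := J m) in *.
  set (fa := first_after J j m).
  assert (Hfa : (fa <= m)%nat) by apply first_after_le.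
  assert (Hnoj : forall i, (fa <= i < m)%nat -> J i <> j) by apply first_after_noupd.
  assert (Htau : tau T J j m = prevT T fa) by apply tau_prevT.
  set (tau0 := tau T J j m) in *.
  assert (HDt : dt T J m = T m - tau0) by reflexivity.
  assert (HDt1 : dt T J m <= 1) by apply Hdt.
  assert (HDt0 : 0 < dt T J m) by (apply dt_pos; auto).
  assert (Hprev : prevT T fa < T fa) by (apply prevT_lt; auto).
  assert (Htau_Ti : forall i, (fa <= i)%nat -> tau0 <= T i).
  { intros i Hi. rewrite Htau. pose proof (Tmono_le T HTinc fa i Hi). lra. }
  assert (Htau_m : tau0 <= T m) by (apply Htau_Ti; auto).
  assert (Hgx : forall x y, (forall i, (i < n)%nat -> x i = y i) -> grad j x = grad j y).
  { intros. apply (grad_ext n phi grad Hphi_n Hgrad); auto. }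
  assert (Hh : forall k, (k < n)%nat -> forall x, derivable_pt_lim (fun s => grad j (upd x k s)) (x k) (hess k j x)).
  { intros. apply Hhess; auto. }
  assert (Hlub : forall r, (fa <= r < m)%nat ->
     is_lub (fun h => exists q, box n T P j (T r) (Some (T m)) (P m j) q /\ h = Rabs (hess (J r) j q))
            (HB n T P hess (J r) j (T r) (Some (T m)) (P m j))).
  { intros r Hr. apply (HB_lub n T P hess HTinc HTunb HT0 Hcont (J r) j r m); auto; try lia.
    left; apply prevT_lt; auto. apply Tmono_le; auto; lia. }
  assert (Hlubbig : forall k, (k < n)%nat ->
     is_lub (fun h => exists q, box n T P j tau0 (Some (T m)) (P m j) q /\ h = Rabs (hess k j q))
            (HB n T P hess k j tau0 (Some (T m)) (P m j))).
  { intros k Hk. apply (HB_lub n T P hess HTinc HTunb HT0 Hcont k j fa m); auto; lra. }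
  set (H_ := fun i => HB n T P hess (J i) j (T i) (Some (T m)) (P m j)).
  assert (HH0 : forall i, (fa <= i < m)%nat -> 0 <= H_ i).
  { intros i Hi. eapply Hsup_nonneg. apply Hlub; auto. apply box_nonempty; auto. apply Tmono_le; auto; lia. }
  set (Hbig := fun k => HB n T P hess k j tau0 (Some (T m)) (P m j)).
  assert (Hbig0 : forall k, (k < n)%nat -> 0 <= Hbig k).
  { intros k Hk. eapply Hsup_nonneg. apply Hlubbig; auto. apply box_nonempty; auto. }
  assert (Hxij : forall i, (fa <= i < m)%nat -> 0 < xi i j).
  { intros i Hi. apply Hxi; auto. intro E; apply (Hnoj i Hi); auto. }
  assert (Hint : forall k, (k < n)%nat -> k <> j ->
     minP P k (pred fa) (m - pred fa) = minP P k fa (m - fa) /\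
     maxP P k (pred fa) (m - pred fa) = maxP P k fa (m - fa)).
  { intros k Hk Hkj. destruct fa as [|l] eqn:Efa; [simpl; auto|]. simpl pred.
    assert (Hl : J l = j) by (apply (first_after_prev J j m); auto).
    destruct (minP_step P k l m ltac:(lia)) as [E1 E2]. rewrite E1, E2.
    rewrite <- (Hupd_other l k) by congruence.
    pose proof (minP_bounds P k (m - S l) (S l) (S l) ltac:(lia)).
    split; [unfold Rmin|unfold Rmax]; destruct (Rle_dec _ _); lra. }
  destruct (Hupd m) as (pt & Hptbox & Hptupd).
  fold j in Hptbox, Hptupd. change (tau T J j m) with tau0 in Hptbox.
  assert (Hptj : pt j = P m j) by (apply Hptbox).
  assert (Hptin : forall k, (k < n)%nat -> k <> j -> minP P k fa (m - fa) <= pt k <= maxP P k fa (m - fa)).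
  { intros k Hk Hkj. destruct (Hint k Hk Hkj) as [<- <-].
    eapply (I_of_box n T P HTinc HTunb HT0 j fa m tau0); eauto. lra. }
  set (E := rsum (fun i => if Nat.leb fa i then H_ i * Rabs (dp P J i) else 0) m).
  assert (HE1 : Rabs (grad j pt - grad j (P m)) <= E).
  { apply (clamp_path n T J P grad hess HTinc HTunb HJ Hupd_other j m fa); auto. }
  assert (HPsj : forall s, (fa <= s <= m)%nat -> P s j = P m j).
  { intros s Hs. symmetry. apply (P_const J P Hupd_other); try lia. intros i Hi; apply Hnoj; lia. }
  assert (HE2 : forall s, (fa <= s <= m)%nat -> Rabs (grad j (P s) - grad j (P m)) <= E).
  { intros s Hs. apply (clamp_path n T J P grad hess HTinc HTunb HJ Hupd_other j m fa); auto.
    intros k Hk Hkj. apply minP_bounds. lia. }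
  assert (HE0 : 0 <= E).
  { eapply Rle_trans; [apply Rabs_pos|apply HE1]. }
  set (gt := grad j pt).
  set (f := fun t' => (grad j (traj T P t'))^2).
  assert (Hfint : Riemann_integrable f tau0 (T m)).
  { rewrite Htau. assert (Em : (fa + (m - fa))%nat = m) by lia.
    rewrite <- Em.
    apply (step_int T HTinc HT0 f (fun s => (grad j (P s))^2)).
    intros s x Hx. unfold f, traj. rewrite (state_idx_eq T HTinc HTunb x s); auto.
    destruct s as [|s]; simpl in Hx; [left; split; auto; lra|right; simpl; split; [lia|lra]]. }
  assert (HRi : 0 <= Rint f tau0 (T m) <= ((1 + 4*epsB)*gt^2 + (1 + /(4*epsB))*(4*E^2)) * dt T J m).
  { rewrite HDt. apply (Rint_bound2 f tau0 (T m) _ Hfint); auto.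
    intros x Hx. rewrite Htau in Hx.
    destruct (traj_range T P HTinc HTunb HT0 fa m x Hfa ltac:(lra) ltac:(lra)) as (s&Hs&Etr).
    unfold f. rewrite Etr. split; [apply pow2_ge_0|].
    replace (grad j (P s)) with (gt + (grad j (P s) - gt)) by ring.
    eapply Rle_trans; [apply (sq_split _ _ (4*epsB)); lra|].
    assert (Rabs (grad j (P s) - gt) <= 2 * E).
    { pose proof (HE2 s Hs). unfold gt. rewrite Rabs_minus_sym in HE1.
      pose proof (Rabs_triang (grad j (P s) - grad j (P m)) (grad j (P m) - grad j pt)).
      replace (grad j (P s) - grad j (P m) + (grad j (P m) - grad j pt)) with (grad j (P s) - grad j pt) in H0 by ring.
      lra. }
    assert ((grad j (P s) - gt)^2 <= 4 * E^2).
    { rewrite <- pow2_abs. pose proof (Rabs_pos (grad j (P s) - gt)). nra. }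
    assert (0 < /(4*epsB)) by (apply Rinv_0_lt_compat; lra). nra. }
  set (A := rsum (fun i => if Nat.leb fa i then xi i j * H_ i * (dp P J i)^2 / dt T J i else 0) m).
  set (B := rsum (fun i => if Nat.leb fa i then H_ i * dt T J i / xi i j else 0) m).
  assert (Hdti : forall i, 0 < dt T J i) by (intros; apply dt_pos; auto).
  assert (HCS : E^2 <= A * B).
  { apply rsum_CS. intros i Hi. destruct (Nat.leb_spec fa i); [|lra].
    pose proof (HH0 i ltac:(lia)). pose proof (Hxij i ltac:(lia)). pose proof (Hdti i).
    split; [apply Rmult_le_pos; auto; apply Rabs_pos|].
    split; [unfold Rdiv; apply Rmult_le_pos; [apply Rmult_le_pos; [apply Rmult_le_pos; lra|apply pow2_ge_0]|left; apply Rinv_0_lt_compat; lra]|].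
    split; [unfold Rdiv; apply Rmult_le_pos; [apply Rmult_le_pos; lra|left; apply Rinv_0_lt_compat; lra]|].
    right. rewrite <- (pow2_abs (dp P J i)). field. lra. }
  assert (HA0 : 0 <= A).
  { apply rsum_nonneg. intros i Hi. destruct (Nat.leb_spec fa i); [|lra].
    pose proof (HH0 i ltac:(lia)). pose proof (Hxij i ltac:(lia)). pose proof (Hdti i).
    unfold Rdiv; apply Rmult_le_pos; [apply Rmult_le_pos; [apply Rmult_le_pos; lra|apply pow2_ge_0]|left; apply Rinv_0_lt_compat; lra]. }
  assert (HB0 : 0 <= B).
  { apply rsum_nonneg. intros i Hi. destruct (Nat.leb_spec fa i); [|lra].
    pose proof (HH0 i ltac:(lia)). pose proof (Hxij i ltac:(lia)). pose proof (Hdti i).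
    unfold Rdiv; apply Rmult_le_pos; [apply Rmult_le_pos; lra|left; apply Rinv_0_lt_compat; lra]. }
  set (mi := fun k => maxinv J xi j k fa m).
  set (Sk := fun k => rsum (fun i => if Nat.leb fa i then (if Nat.eqb k (J i) then dt T J i else 0) else 0) m).
  assert (HBb1 : B <= rsum (fun k => Hbig k * mi k * Sk k) n).
  { apply Rle_trans with (rsum (fun i => if Nat.leb fa i then Hbig (J i) * mi (J i) * dt T J i else 0) m).
    - apply rsum_le. intros i Hi. destruct (Nat.leb_spec fa i); [|lra].
      pose proof (HH0 i ltac:(lia)). pose proof (Hxij i ltac:(lia)). pose proof (Hdti i).
      assert (H_ i <= Hbig (J i)).
      { apply (Hsup_mono hess (J i) j). apply Hlub; lia. apply Hlubbig; auto.
        intros q [Hq1 Hq2]. split; auto. intros k Hk Hkj. destruct (Hq2 k Hk Hkj) as (a&b&?&?&?&?).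
        exists a, b. pose proof (Htau_Ti i ltac:(lia)). repeat split; auto; lra. }
      assert (/ xi i j <= mi (J i)) by (apply maxinv_ge; auto; lia).
      assert (0 < / xi i j) by (apply Rinv_0_lt_compat; auto).
      unfold Rdiv. replace (H_ i * dt T J i * / xi i j) with (H_ i * / xi i j * dt T J i) by ring.
      apply Rmult_le_compat_r; [lra|]. apply Rmult_le_compat; lra.
    - unfold Sk. rewrite (rsum_ext _ (fun i => rsum (fun k => if Nat.leb fa i then
          (if Nat.eqb k (J i) then Hbig k * mi k * dt T J i else 0) else 0) n)).
      + rewrite rsum_swap. apply rsum_le. intros k Hk. rewrite <- rsum_scal. right. apply rsum_ext.
        intros i Hi. destruct (Nat.leb fa i); [|ring]. destruct (Nat.eqb k (J i)); ring.
      + intros i Hi. destruct (Nat.leb fa i); [|rewrite rsum_zero; auto].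
        rewrite (rsum_ext _ (fun k => if Nat.eqb k (J i) then Hbig (J i) * mi (J i) * dt T J i else 0)).
        * rewrite rsum_ind0; auto.
        * intros k Hk. destruct (Nat.eqb_spec k (J i)); subst; auto. }
  assert (HBb2 : rsum (fun k => Hbig k * mi k * Sk k) n <=
     rsum (fun k => if Nat.eqb k j then 0 else mi k * Hbig k) n * (1 + dt T J m)).
  { rewrite Rmult_comm, <- rsum_scal. apply rsum_le. intros k Hk.
    pose proof (Hbig0 k Hk). pose proof (maxinv_nonneg J xi j k fa m). fold (mi k) in H0.
    destruct (Nat.eqb_spec k j).
    - subst k. unfold Sk. rewrite (rsum_ext _ (fun _ => 0)). rewrite rsum_zero. lra.
      intros i Hi. destruct (Nat.leb_spec fa i); auto. destruct (Nat.eqb_spec j (J i)); auto.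
      exfalso; apply (Hnoj i); auto; lia.
    - assert (Sk k <= 1 + dt T J m).
      { unfold Sk. replace m with (fa + (m - fa))%nat at 1 by lia.
        eapply Rle_trans; [apply (Sk_bound T J HTinc HT0 Hdt k fa tau0); lra|].
        replace (fa + (m - fa))%nat with m by lia.
        rewrite tau_prevT. pose proof (prevT_lt T HTinc HT0 (first_after J k m)).
        pose proof (Tmono_le T HTinc _ _ (first_after_le J k m)).
        unfold Rmax. destruct (Rle_dec _ _); lra. }
      assert (0 <= Hbig k * mi k) by nra. nra. }
  assert (HA4 : rsum (fun k => if Nat.eqb k j then 0 else mi k * Hbig k) n <= epsB * gam m) by apply A4.
  assert (HBb : B <= epsB * gam m * (1 + dt T J m)).
  { assert (0 <= 1 + dt T J m) by lra.
    pose proof (Rmult_le_compat_r _ _ _ H HA4). lra. }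
  assert (Hmix : E * Rabs (dp P J m) <= A + (dp P J m)^2 * B / 4).
  { unfold E. rewrite Rmult_comm, <- rsum_scal.
    replace (A + (dp P J m)^2 * B / 4) with (A + ((dp P J m)^2 / 4) * B) by (unfold Rdiv; ring).
    unfold A, B. rewrite <- rsum_scal, <- rsum_plus. apply rsum_le. intros i Hi.
    destruct (Nat.leb_spec fa i); [|lra].
    pose proof (amgm_term (H_ i) (xi i j) (dt T J i) (dp P J i) (dp P J m) (HH0 i ltac:(lia)) (Hxij i ltac:(lia)) (Hdti i)).
    replace (Rabs (dp P J m) * (H_ i * Rabs (dp P J i))) with (H_ i * Rabs (dp P J i) * Rabs (dp P J m)) by ring.
    eapply Rle_trans; [apply H0|]. right. pose proof (Hxij i ltac:(lia)). pose proof (Hdti i). field. repeat split; lra. }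
  assert (HOLD : rsum (fun i => if Nat.leb fa i then
       xi i j * HB n T P hess (J i) j (T i) (Some (T m)) (P m j)
         * (dp P J i)^2 / dt T J i * (2 - c2 * (T m - T i)) else 0) m >= (2 - c2) * A).
  { apply Rle_ge. unfold A. rewrite <- rsum_scal. apply rsum_le. intros i Hi.
    destruct (Nat.leb_spec fa i); [|lra].
    change (HB n T P hess (J i) j (T i) (Some (T m)) (P m j)) with (H_ i).
    set (X := xi i j * H_ i * (dp P J i)^2 / dt T J i).
    assert (0 <= X).
    { pose proof (HH0 i ltac:(lia)). pose proof (Hxij i ltac:(lia)). pose proof (Hdti i).
      unfold Rdiv; apply Rmult_le_pos; [apply Rmult_le_pos; [apply Rmult_le_pos; lra|apply pow2_ge_0]|left; apply Rinv_0_lt_compat; lra]. }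
    assert (T m - T i <= 1) by (pose proof (Htau_Ti i ltac:(lia)); lra).
    assert (0 <= T m - T i) by (pose proof (Tmono_le T HTinc i m ltac:(lia)); lra).
    assert (0 <= X * (c2 * (1 - (T m - T i)))) by (apply Rmult_le_pos; nra).
    lra. }
  assert (Hphi : phi (P m) - phi (P (S m)) >= - grad j (P m) * dp P J m - gam m / alpha * (dp P J m)^2).
  { assert (Hbt : between (P (S m) j) (P m j) (P (S m) j)).
    { unfold between. destruct (Rle_dec (P m j) (P (S m) j)); [left|right]; lra. }
    pose proof (A1 m (P (S m) j) Hbt) as H1.
    assert (Eu : phi (upd (P m) j (P (S m) j)) = phi (P (S m))).
    { apply Hphi_n. intros i _. unfold upd. destruct (Nat.eqb_spec i j); [subst; auto|].
      rewrite Hupd_other; auto. }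
    change (J m) with j in H1. rewrite Eu in H1.
    assert (Edp : dp P J m = P (S m) j - P m j) by reflexivity.
    rewrite Edp. lra. }
  assert (Hdpm : dp P J m = - gt / gam m * dt T J m).
  { change (dp P J m) with (P (S m) j - P m j). rewrite Hptupd. unfold gt, Rdiv. ring. }
  pose proof (A3 m) as HA3. change (J m) with j in HA3.
  pose proof (A2 m) as HA2. change (J m) with j in HA2.
  pose proof (Hgam m) as Hgm.
  eapply (final_alg (phi (P m) - phi (P (S m))) (grad j (P m)) gt (dp P J m) (dt T J m) (gam m) (gbar j) E A B
            (Rint f tau0 (T m))); eauto.
Qed.
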